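(* Let $\rho>0$, $\epsilon_0>0$, and $0<\lambda_1<\lambda_2$ with $\lambda_1(1+\epsilon_0)\neq\lambda_2$. For $\beta$ with $\frac{\epsilon_0}{1+\epsilon_0}<\beta<1$ (equivalently $\beta>(1-\beta)\epsilon_0$, $\beta<1$) define $A(\beta)=\frac{\epsilon_0}{\rho[\beta-(1-\beta)\epsilon_0]}$, $B(\beta)=\frac{\epsilon_0}{\rho(1-\beta)}$, $\zeta(\beta)=\max\{A(\beta),B(\beta)\}$. Then the minimization problem $$\min_\beta\ 1-e^{-(\lambda_2A(\beta)+\lambda_1\zeta(\beta))}\quad\text{s.t. } 0\le\beta\le1,\ \beta>(1-\beta)\epsilon_0$$ has optimal solution $$\beta^*=\frac{\sqrt{1+\epsilon_0}\,(\epsilon_0\lambda_1-\lambda_2)+\sqrt{\lambda_1\lambda_2}}{\sqrt{1+\epsilon_0}\,[\lambda_1(1+\epsilon_0)-\lambda_2]}.$$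
   Context: Interpretation: downlink two-user NOMA with users at distances $d_1<d_2$, $\lambda_k=d_k^\alpha$ ($\alpha>0$ the path loss exponent), transmit SNR $\rho$, target SNR $\epsilon_0=2^{R_0^*}-1$, and $\beta$ the power fraction given to the farther user; the objective is the common outage probability when the users are ordered correctly. At $\beta=1$, $B$ is infinite and the objective is interpreted as $1$. *)

(* Defs.v *)
From Stdlib Require Import Reals.
Open Scope R_scope.

Definition A_fun (rho eps0 beta : R) : R :=
  eps0 / (rho * (beta - (1 - beta) * eps0)).

Definition B_fun (rho eps0 beta : R) : R :=
  eps0 / (rho * (1 - beta)).

Definition zeta_fun (rho eps0 beta : R) : R :=
  Rmax (A_fun rho eps0 beta) (B_fun rho eps0 beta).

(* Objective 1 - exp(-(lambda2 A + lambda1 zeta)); at beta = 1, B is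
   infinite and the objective is interpreted as 1. *)
Definition objective (rho eps0 lam1 lam2 beta : R) : R :=
  if Req_EM_T beta 1 then 1
  else 1 - exp (- (lam2 * A_fun rho eps0 beta + lam1 * zeta_fun rho eps0 beta)).

Definition feasible (eps0 beta : R) : Prop :=
  0 <= beta <= 1 /\ (1 - beta) * eps0 < beta.

Definition beta_star (eps0 lam1 lam2 : R) : R :=
  (sqrt (1 + eps0) * (eps0 * lam1 - lam2) + sqrt (lam1 * lam2)) /
  (sqrt (1 + eps0) * (lam1 * (1 + eps0) - lam2)).

(* Main.v *)
Require Import Defs.
From Stdlib Require Import Reals Lra Psatz.
Open Scope R_scope.

Lemma key_ineq (a b s u v : R) : 0 < u -> 0 < v -> v + s*s*u = 1 ->
  (b+a*s)^2 <= (b*b)/v + (a*a)/u.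
Proof.
  intros Hu Hv Hc.
  assert (H : (b+a*s)^2 * (u*v) <= b*b*u + a*a*v).
  { assert (E : b*b*u + a*a*v = (b*b*u + a*a*v)*(v+s*s*u)) by (rewrite Hc; ring).
    rewrite E. pose proof (pow2_ge_0 (b*s*u - a*v)).
    assert (Q : (b*b*u + a*a*v)*(v+s*s*u) - (b+a*s)^2*(u*v) = (b*s*u - a*v)^2) by ring.
    lra. }
  replace ((b*b)/v + (a*a)/u) with ((b*b*u + a*a*v)/(u*v)) by (field; lra).
  apply Rmult_le_reg_r with (u*v). nra.
  unfold Rdiv. rewrite Rmult_assoc, Rinv_l by nra. lra.
Qed.

Theorem corollary2 (rho eps0 lam1 lam2 : R) :
  0 < rho -> 0 < eps0 -> 0 < lam1 -> lam1 < lam2 ->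
  lam1 * (1 + eps0) <> lam2 ->
  feasible eps0 (beta_star eps0 lam1 lam2) /\
  (forall beta, feasible eps0 beta ->
     objective rho eps0 lam1 lam2 (beta_star eps0 lam1 lam2)
     <= objective rho eps0 lam1 lam2 beta).
Proof.
  intros Hr He H1 H12 Hne.
  set (a := sqrt lam1). set (b := sqrt lam2). set (s := sqrt (1+eps0)).
  assert (Ha : 0 < a) by (apply sqrt_lt_R0; lra).
  assert (Hb : 0 < b) by (apply sqrt_lt_R0; lra).
  assert (Hs : 0 < s) by (apply sqrt_lt_R0; lra).
  assert (Haa : a*a = lam1) by (apply sqrt_sqrt; lra).
  assert (Hbb : b*b = lam2) by (apply sqrt_sqrt; lra).
  assert (Hss : s*s = 1+eps0) by (apply sqrt_sqrt; lra).
  assert (Hab : sqrt (lam1*lam2) = a*b) by (apply sqrt_mult; lra).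
  assert (Hs1 : 1 < s) by nra.
  assert (Hlt : a < b) by (apply sqrt_lt_1; lra).
  assert (Hden : a*a*(s*s) - b*b <> 0).
  { intro C. apply Hne. rewrite <- Haa, <- Hbb, <- Hss. lra. }
  assert (Hden2 : a*s - b <> 0).
  { intro C. apply Hden. replace (a*a*(s*s) - b*b) with ((a*s-b)*(a*s+b)) by ring.
    rewrite C; ring. }
  assert (Hbs : beta_star eps0 lam1 lam2 = 1 - a/(s*(a*s+b))).
  { unfold beta_star. fold s. rewrite Hab.
    replace eps0 with (s*s-1) by lra. rewrite <- Haa, <- Hbb.
    field. repeat split. all: try lra. all: try nra. }
  set (us := a/(s*(a*s+b))).
  assert (Hus : 0 < us) by (unfold us; apply Rdiv_lt_0_compat; nra).
  assert (Hus1 : us < 1).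
  { unfold us. apply Rmult_lt_reg_r with (s*(a*s+b)). nra.
    unfold Rdiv. rewrite Rmult_assoc, Rinv_l by nra.
    assert (a < a*(s*s)) by nra. nra. }
  assert (Hvs : beta_star eps0 lam1 lam2 - (1 - beta_star eps0 lam1 lam2)*eps0
                = b/(a*s+b)).
  { rewrite Hbs. unfold us. replace eps0 with (s*s-1) by lra. field. split; nra. }
  assert (Hvsp : 0 < b/(a*s+b)) by (apply Rdiv_lt_0_compat; nra).
  assert (Huv : us <= b/(a*s+b)).
  { assert (D : b/(a*s+b) - us = (b*s - a)/(s*(a*s+b))).
    { unfold us. field. split; nra. }
    assert (0 <= (b*s - a)/(s*(a*s+b))).
    { unfold Rdiv; apply Rmult_le_pos; [nra|left; apply Rinv_0_lt_compat; nra]. }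
    lra. }
  assert (Hfeas : feasible eps0 (beta_star eps0 lam1 lam2)).
  { unfold feasible. rewrite Hbs. fold us. split; [lra|].
    rewrite Hbs in Hvs. fold us in Hvs. lra. }
  split; [exact Hfeas|].
  intros beta [[Hb0 Hb1] Hbv].
  unfold objective.
  destruct (Req_EM_T (beta_star eps0 lam1 lam2) 1) as [E|_].
  { rewrite Hbs in E. fold us in E. lra. }
  destruct (Req_EM_T beta 1) as [E|Hne1].
  { pose proof (exp_pos (- (lam2 * A_fun rho eps0 (beta_star eps0 lam1 lam2) +
      lam1 * zeta_fun rho eps0 (beta_star eps0 lam1 lam2)))). lra. }
  apply Rplus_le_compat_l. apply Ropp_le_contravar.
  set (XS := lam2 * A_fun rho eps0 (beta_star eps0 lam1 lam2) +
      lam1 * zeta_fun rho eps0 (beta_star eps0 lam1 lam2)).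
  set (X := lam2 * A_fun rho eps0 beta + lam1 * zeta_fun rho eps0 beta).
  assert (Hu1 : 1 - beta_star eps0 lam1 lam2 = us) by (rewrite Hbs; fold us; ring).
  assert (HXS : XS = eps0/rho * (b + a*s)^2).
  { unfold XS, zeta_fun, A_fun, B_fun. rewrite Hvs, Hu1.
    rewrite Rmax_right.
    - unfold us. rewrite <- Haa, <- Hbb. field. repeat split; nra.
    - unfold Rdiv. apply Rmult_le_compat_l. lra.
      apply Rinv_le_contravar. nra. apply Rmult_le_compat_l; lra. }
  assert (Hu : 0 < 1 - beta) by (destruct Hb1; [lra| contradiction]).
  assert (Hv : 0 < beta - (1-beta)*eps0) by lra.
  assert (HX : eps0/rho * (b + a*s)^2 <= X).
  { apply Rle_trans with (lam2 * A_fun rho eps0 beta + lam1 * B_fun rho eps0 beta).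
    - unfold A_fun, B_fun.
      replace (lam2 * (eps0 / (rho * (beta - (1 - beta) * eps0))) +
               lam1 * (eps0 / (rho * (1 - beta))))
        with (eps0/rho * ((b*b)/(beta - (1 - beta) * eps0) + (a*a)/(1-beta)))
        by (rewrite <- Haa, <- Hbb; field; repeat split; lra).
      apply Rmult_le_compat_l.
      + unfold Rdiv; apply Rmult_le_pos; [lra|left; apply Rinv_0_lt_compat; lra].
      + apply key_ineq; try lra. rewrite Hss. ring.
    - unfold X, zeta_fun. apply Rplus_le_compat_l. apply Rmult_le_compat_l. lra.
      apply Rmax_r. }
  assert (Hle : - X <= - XS) by lra.
  destruct (Rle_lt_or_eq_dec _ _ Hle) as [L|L].
  - left. apply exp_increasing. exact L.
  - rewrite L. lra.
Qed.
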